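(* Consider a market with $n$ sellers of true costs $c_1,\dots,c_n\in[0,1]$ and $n$ buyers of true values $v_1,\dots,v_n\in[0,1]$. Suppose reals $\underline c_i\le c_i\le\bar c_i$ and $\underline v_j\le v_j\le\bar v_j$ are known with $\bar c_i-\underline c_i\le\delta$ and $\bar v_j-\underline v_j\le\delta$ for all $i,j$. Let $M$ be a matching maximizing gains-from-trade when sellers have costs $\bar c_i$ and buyers have values $\underline v_j$, let $S_1$, $B_1$ be the sellers and buyers matched in $M$, and post the segmented-price mechanism: price $\max_{i\in S_1}\bar c_i$ to sellers in $S_1$ and price $0$ to the other sellers; price $\min_{j\in B_1}\underline v_j$ to buyers in $B_1$ and price $1$ to the other buyers. Then the realized gains-from-trade (under any maximum-cardinality matching of the accepting traders) is at least $\mathrm{GFT}^\star-2n\delta$, where $\mathrm{GFT}^\star$ is the optimal gains-from-trade for the true costs and values.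
   Context: A seller accepts a price $p$ iff $p\ge$ its cost; a buyer accepts price $q$ iff $q\le$ its value (ties in favour of accepting). A maximum-cardinality matching between accepting sellers and accepting buyers is formed, and the GFT of a matching $M$ is $\sum_{(i,j)\in M}(v_j-c_i)$. $\mathrm{GFT}^\star$ is the maximum GFT over all matchings between sellers and buyers. A segmented-price mechanism partitions sellers into at most two groups and buyers into at most two groups and posts one price per group. *)

(* Defs.v *)
From mathcomp Require Import all_boot all_order all_algebra.
Set Implicit Arguments. Unset Strict Implicit. Unset Printing Implicit Defensive.
Import Order.TTheory GRing.Theory Num.Theory.
Local Open Scope ring_scope.

Section Market.
Variables (R : realFieldType) (n : nat).
Implicit Types (c v p q : 'I_n -> R) (M : {set 'I_n * 'I_n}).

(* A matching between sellers ('I_n, first component) and buyers ('I_n,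
   second component): a set of seller-buyer pairs in which each seller and
   each buyer occurs at most once. *)
Definition matching M : bool :=
  [forall x in M, forall y in M, (x.1 == y.1) == (x.2 == y.2)].

Definition GFT c v M : R := \sum_(x in M) (v x.2 - c x.1).

(* Maximum GFT over all matchings (the empty matching gives 0, so the
   default value 0 of the iterated max is harmless). *)
Definition GFTstar c v : R :=
  \big[Num.max/0]_(M : {set 'I_n * 'I_n} | matching M) GFT c v M.

Definition matched_sellers M : {set 'I_n} := [set x.1 | x in M].
Definition matched_buyers M : {set 'I_n} := [set x.2 | x in M].

Definition seller_price ch M (i : 'I_n) : R :=
  if i \in matched_sellers M
  then \big[Num.max/0]_(k in matched_sellers M) ch k else 0.
Definition buyer_price vl M (j : 'I_n) : R :=
  if j \in matched_buyers M
  then \big[Num.min/1]_(k in matched_buyers M) vl k else 1.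

Definition seller_accepts c p (i : 'I_n) : bool := c i <= p i.
Definition buyer_accepts v q (j : 'I_n) : bool := q j <= v j.

Definition accepting_matching c v p q M : bool :=
  matching M && [forall x in M, seller_accepts c p x.1 && buyer_accepts v q x.2].

Definition realized_matching c v p q M : Prop :=
  accepting_matching c v p q M /\
  forall M', accepting_matching c v p q M' -> (#|M'| <= #|M|)%N.

End Market.

(* Main.v *)
Require Import Defs.
From mathcomp Require Import all_boot all_order all_algebra.
Import Order.TTheory GRing.Theory Num.Theory.
From mathcomp Require Import ring lra.
Local Open Scope ring_scope.
Set Implicit Arguments. Unset Strict Implicit.

Section H.
Variables (R : realFieldType) (n : nat).

Lemma match_inj1 (M : {set 'I_n * 'I_n}) : matching M -> {in M &, injective (fun x => x.1)}.
Proof.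
move=> /forall_inP hM [a b] [a' b'] /hM /forall_inP h1 /h1 /= /eqP h2 ea; subst a'.
by move: h2; rewrite eqxx => /esym /eqP ->.
Qed.

Lemma match_inj2 (M : {set 'I_n * 'I_n}) : matching M -> {in M &, injective (fun x => x.2)}.
Proof.
move=> /forall_inP hM [a b] [a' b'] /hM /forall_inP h1 /h1 /= /eqP h2 eb; subst b'.
by move: h2; rewrite eqxx => /eqP ->.
Qed.

Lemma card_match (M : {set 'I_n * 'I_n}) : matching M -> (#|M| <= n)%N.
Proof.
move=> hM; rewrite -(card_in_imset (match_inj1 hM)).
by rewrite -[X in (_ <= X)%N](card_ord n) max_card.
Qed.

Lemma GFT_split (c v : 'I_n -> R) M : matching M ->
  GFT c v M = \sum_(j in matched_buyers M) v j - \sum_(i in matched_sellers M) c i.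
Proof.
move=> hM; rewrite /GFT /matched_buyers /matched_sellers.
rewrite (big_imset _ (match_inj2 hM)) (big_imset _ (match_inj1 hM)) /=.
by rewrite sumrB.
Qed.

Lemma sum_sub (g : 'I_n -> R) (T S : {set 'I_n}) :
  (forall x, 0 <= g x) -> (forall x, x \in T -> x \notin S -> g x = 0) ->
  \sum_(x in T) g x <= \sum_(x in S) g x.
Proof.
move=> g0 gz.
rewrite (big_setID S) /= [X in _ <= X](big_setID T) /=.
rewrite [X in _ + X]big1 ?addr0; last first.
  by move=> i; rewrite in_setD => /andP [iS iT]; apply: gz.
rewrite setIC lerDl; apply: sumr_ge0 => i _; exact: g0.
Qed.

End H.

Theorem lemma5p6 (R : realFieldType) (n : nat) (c v cl ch vl vh : 'I_n -> R)
    (delta : R) (M Mr : {set 'I_n * 'I_n}) :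
  (forall i, 0 <= c i <= 1) -> (forall j, 0 <= v j <= 1) ->
  (forall i, cl i <= c i <= ch i) -> (forall j, vl j <= v j <= vh j) ->
  (forall i, ch i - cl i <= delta) -> (forall j, vh j - vl j <= delta) ->
  matching M -> GFT ch vl M = GFTstar ch vl ->
  realized_matching c v (seller_price ch M) (buyer_price vl M) Mr ->
  GFTstar c v - 2%:R * n%:R * delta <= GFT c v Mr.
Proof.
move=> c01 v01 hc hv dc dv hM optM [/andP [hMr accMr] maxMr].
have ndelta : 0 <= n%:R * delta.
  have [->|n0] := posnP n; first by rewrite mul0r.
  apply: mulr_ge0 => //; apply: le_trans (dc (Ordinal n0)).
  by case/andP: (hc (Ordinal n0)) => h1 h2; rewrite subr_ge0 (le_trans h1 h2).
have step1 : GFTstar c v <= GFT ch vl M + 2%:R * n%:R * delta.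
  rewrite /GFTstar; apply: bigmax_le.
    rewrite optM /GFTstar; apply: addr_ge0; last by rewrite -mulrA mulr_ge0.
    exact: bigmax_ge_id.
  move=> M' hM'.
  apply: (@le_trans _ _ (GFT ch vl M' + 2%:R * #|M'|%:R * delta)).
    have -> : 2%:R * #|M'|%:R * delta = \sum_(x in M') (2%:R * delta) :> R.
      rewrite sumr_const -mulr_natr; ring.
    rewrite /GFT -big_split /=.
    apply: ler_sum => x _.
    have := dc x.1; have := dv x.2; case/andP: (hc x.1); case/andP: (hv x.2).
    move=> *; lra.
  apply: lerD; first by rewrite optM /GFTstar; exact: (le_bigmax_cond _ (P := fun M => matching M)).
  rewrite -!mulrA ler_pM2l ?ltr0n //.
  have [n0|n0] := posnP n.
    have h : (#|M'| <= 0)%N by rewrite -n0 card_match.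
    by move: h; rewrite leqn0 => /eqP ->; rewrite mul0r.
  have d0 : 0 <= delta.
    apply: le_trans (dc (Ordinal n0)).
    by case/andP: (hc (Ordinal n0)) => h1 h2; rewrite subr_ge0 (le_trans h1 h2).
  by apply: ler_wpM2r => //; rewrite ler_nat card_match.
have step2 : GFT ch vl M <= GFT c v M.
  apply: ler_sum => x _; case/andP: (hc x.1); case/andP: (hv x.2) => *; lra.
have accM : accepting_matching c v (seller_price ch M) (buyer_price vl M) M.
  rewrite /accepting_matching hM /=; apply/forall_inP => x xM.
  have x1 : x.1 \in matched_sellers M by apply/imsetP; exists x.
  have x2 : x.2 \in matched_buyers M by apply/imsetP; exists x.
  rewrite /seller_accepts /buyer_accepts /seller_price /buyer_price x1 x2.
  apply/andP; split.
    case/andP: (hc x.1) => _ h; apply: le_trans h _.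
    exact: (le_bigmax_cond _ (P := fun k => k \in matched_sellers M)).
  case/andP: (hv x.2) => h _; apply: le_trans h.
  exact: (bigmin_le_cond _ (P := fun k => k \in matched_buyers M)).
have cardM := maxMr _ accM.
have step3 : GFT c v M <= GFT c v Mr.
  rewrite (GFT_split c v hM) (GFT_split c v hMr).
  have hs : \sum_(i in matched_sellers Mr) c i <= \sum_(i in matched_sellers M) c i.
    apply: sum_sub => [x|x xT xS]; first by case/andP: (c01 x).
    case/imsetP: xT => y yMr ey.
    move/forall_inP: accMr => /(_ y yMr) /andP [].
    rewrite /seller_accepts /seller_price -ey (negbTE xS) => h _.
    by apply/eqP; rewrite eq_le h; case/andP: (c01 x).
  have hb : \sum_(j in matched_buyers Mr) (1 - v j) <= \sum_(j in matched_buyers M) (1 - v j).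
    apply: sum_sub => [x|x xT xS]; first by case/andP: (v01 x) => _; rewrite subr_ge0.
    case/imsetP: xT => y yMr ey.
    move/forall_inP: accMr => /(_ y yMr) /andP [] _.
    rewrite /buyer_accepts /buyer_price -ey (negbTE xS) => h.
    by apply/eqP; rewrite subr_eq0 eq_le h; case/andP: (v01 x).
  move: hb; rewrite !sumrB !sumr_const.
  rewrite /matched_buyers !card_in_imset; try exact: match_inj2.
  have : (#|M|%:R <= #|Mr|%:R :> R) by rewrite ler_nat.
  move: hs; rewrite /matched_sellers => *; lra.
lra.
Qed.
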